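(* Let $X_\sigma$ be the root monoid associated with a cone $\sigma$, a $k$-dimensional regular face $\tau$ with primitive ray generators $p_1,\ldots,p_k$, and a set of Demazure roots $\{e_1^{(r)},e_2^{(r)}\}_{r=1}^k$ compatible with $\tau$. Let $\gamma$ be a face of $\sigma$ and let $E_\gamma$ be the set of idempotents ($x*x=x$) lying in the orbit $O_\gamma$. Then: (1) if $\tau\subseteq\gamma$, then $E_\gamma=\{x_\gamma\}$; (2) if there exists $r\in\{1,\ldots,k\}$ with $p_r\notin\gamma$ such that either both $e_1^{(r)},e_2^{(r)}\notin\gamma^\perp$ or both $e_1^{(r)},e_2^{(r)}\in\gamma^\perp$, then $E_\gamma=\varnothing$; (3) if for every $r\in\{1,\ldots,k\}$ with $p_r\notin\gamma$ exactly one of $e_1^{(r)},e_2^{(r)}$ lies in $\gamma^\perp$, then $E_\gamma=\{x\in O_\gamma:\chi^u(x)=1\ \text{for all } u\in\operatorname{cone}(\tau,\gamma)^\perp\cap S_\sigma\}$.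
   Context: $\mathbb{K}$ algebraically closed of characteristic zero; $N$ a lattice, $M$ its dual, $\sigma\subseteq N_\mathbb{Q}$ a strongly convex rational polyhedral cone, $S_\sigma=\sigma^\vee\cap M$, $X_\sigma=\operatorname{Spec}\bigoplus_{u\in S_\sigma}\mathbb{K}\chi^u$; points of $X_\sigma$ are semigroup homomorphisms $S_\sigma\to(\mathbb{K},\cdot)$. For a face $\gamma$ of $\sigma$, $x_\gamma$ is the point with $\chi^u(x_\gamma)=1$ if $u\in\gamma^\perp$ and $0$ otherwise, and $O_\gamma$ is the torus orbit of $x_\gamma$, i.e. the set of points $x$ with $\chi^u(x)\ne0$ iff $u\in\gamma^\perp$. $\operatorname{cone}(\tau,\gamma)$ is the cone generated by $\tau$ and $\gamma$. Regular face: primitive ray generators are part of a basis of $N$. Demazure root for a ray generator $p_i$ of $\sigma$: $e\in M$ with $\langle p_i,e\rangle=-1$, $\langle p_j,e\rangle\ge0$ for the other ray generators $p_j$. Compatibility with $\tau$: $\langle p_s,e_1^{(r)}\rangle=\langle p_s,e_2^{(r)}\rangle=-\delta_{rs}$, $r,s=1,\ldots,k$. The root monoid is $X_\sigma$ with multiplication $*$ given by $\chi^u(x*y)=\sum_{\bar i+\bar j=\langle\bar p,u\rangle}\prod_{r}\binom{\langle p_r,u\rangle}{i_r}\chi^{u+\sum_ri_re_2^{(r)}}(x)\,\chi^{u+\sum_rj_re_1^{(r)}}(y)$, $u\in S_\sigma$, where $\langle\bar p,u\rangle=(\langle p_1,u\rangle,\ldots,\langle p_k,u\rangle)$ and $\bar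 i,\bar j\in\mathbb{Z}_{\ge0}^k$ (the dual of the comultiplication $\chi^u\mapsto\chi^u\otimes\chi^u\prod_r(1\otimes\chi^{e_1^{(r)}}+\chi^{e_2^{(r)}}\otimes1)^{\langle p_r,u\rangle}$). *)

(* Defs.v *)
From HB Require Import structures.
From mathcomp Require Import all_boot all_order all_algebra.
Set Implicit Arguments. Unset Strict Implicit. Unset Printing Implicit Defensive.
Import Order.TTheory GRing.Theory Num.Theory.
Local Open Scope ring_scope.

(* N = M = Z^n, realised as row vectors 'rV[int]_n; the duality pairing is
   the standard dot product. *)
Definition pairing (n : nat) (p u : 'rV[int]_n) : int :=
  \sum_(i < n) p ord0 i * u ord0 i.

Definition primitive (n : nat) (p : 'rV[int]_n) : Prop :=
  forall (c : nat) (v : 'rV[int]_n), p = v *~ (c%:Z) -> c = 1%N.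

(* sigma = cone(P 0, ..., P (m-1)) ; u in S_sigma = sigma^vee cap M *)
Definition inS (n m : nat) (P : 'I_m -> 'rV[int]_n) (u : 'rV[int]_n) : Prop :=
  forall j, 0 <= pairing (P j) u.

Definition strongly_convex (n m : nat) (P : 'I_m -> 'rV[int]_n) : Prop :=
  forall c : 'I_m -> nat, \sum_(j < m) P j *~ (c j)%:Z = 0 -> forall j, c j = 0%N.

(* A face of sigma = cone(P), represented by the set F of indices of the ray
   generators it contains: gamma = sigma cap w^perp for some w in sigma^vee
   (w may be taken integral), and then gamma = cone(P j : j in F). *)
Definition is_face (n m : nat) (P : 'I_m -> 'rV[int]_n) (F : {set 'I_m}) : Prop :=
  exists w : 'rV[int]_n, inS P w /\ forall j, (j \in F) <-> pairing (P j) w = 0.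

Definition ray_generators (n m : nat) (P : 'I_m -> 'rV[int]_n) : Prop :=
  (forall j, primitive (P j)) /\ (forall j, is_face P [set j]).

Definition in_perp (n m : nat) (P : 'I_m -> 'rV[int]_n) (F : {set 'I_m})
  (u : 'rV[int]_n) : bool :=
  [forall j in F, pairing (P j) u == 0].

(* tau = cone(P (t r) : r < k) is a regular face of sigma:
   its ray generators are part of a basis of N. *)
Definition regular_face (n m k : nat) (P : 'I_m -> 'rV[int]_n) (t : 'I_k -> 'I_m) : Prop :=
  injective t /\ is_face P [set t r | r : 'I_k] /\
  exists B : 'M[int]_n, B \in unitmx /\
    forall r : 'I_k, exists i : 'I_n, row i B = P (t r).

Definition demazure_root (n m : nat) (P : 'I_m -> 'rV[int]_n) (i : 'I_m) (e : 'rV[int]_n) : Prop :=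
  pairing (P i) e = -1 /\ forall j, j != i -> 0 <= pairing (P j) e.

Definition compatible (n m k : nat) (P : 'I_m -> 'rV[int]_n) (t : 'I_k -> 'I_m)
  (e1 e2 : 'I_k -> 'rV[int]_n) : Prop :=
  (forall r, demazure_root P (t r) (e1 r) /\ demazure_root P (t r) (e2 r)) /\
  forall r s : 'I_k, pairing (P (t s)) (e1 r) = - (r == s)%:R /\
                     pairing (P (t s)) (e2 r) = - (r == s)%:R.

(* Points of X_sigma: monoid homomorphisms S_sigma -> (K, * ), given as
   functions on M whose values outside S_sigma are irrelevant. *)
Definition is_point (K : fieldType) (n m : nat) (P : 'I_m -> 'rV[int]_n)
  (x : 'rV[int]_n -> K) : Prop :=
  x 0 = 1 /\ forall u v, inS P u -> inS P v -> x (u + v) = x u * x v.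

Definition eq_pt (K : fieldType) (n m : nat) (P : 'I_m -> 'rV[int]_n)
  (x y : 'rV[int]_n -> K) : Prop :=
  forall u, inS P u -> x u = y u.

Definition rm_mul (K : fieldType) (n m k : nat) (P : 'I_m -> 'rV[int]_n)
  (t : 'I_k -> 'I_m) (e1 e2 : 'I_k -> 'rV[int]_n) (x y : 'rV[int]_n -> K)
  (u : 'rV[int]_n) : K :=
  let a := fun r : 'I_k => `|pairing (P (t r)) u|%N in
  \sum_(i : {dffun forall r : 'I_k, 'I_(a r).+1})
    (\prod_(r < k) ('C(a r, i r))%:R) *
    x (u + \sum_(r < k) e2 r *~ (i r : nat)%:Z) *
    y (u + \sum_(r < k) e1 r *~ (a r - i r)%:Z).

Definition rm_idempotent (K : fieldType) (n m k : nat) (P : 'I_m -> 'rV[int]_n)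
  (t : 'I_k -> 'I_m) (e1 e2 : 'I_k -> 'rV[int]_n) (x : 'rV[int]_n -> K) : Prop :=
  eq_pt P (rm_mul P t e1 e2 x x) x.

Definition x_face (K : fieldType) (n m : nat) (P : 'I_m -> 'rV[int]_n)
  (F : {set 'I_m}) (u : 'rV[int]_n) : K :=
  if in_perp P F u then 1 else 0.

Definition in_orbitO (K : fieldType) (n m : nat) (P : 'I_m -> 'rV[int]_n)
  (F : {set 'I_m}) (x : 'rV[int]_n -> K) : Prop :=
  is_point P x /\ forall u, inS P u -> (x u != 0 <-> in_perp P F u).

(* Main.v *)
Require Import Defs.
From HB Require Import structures.
From mathcomp Require Import all_boot all_order all_algebra.
Set Implicit Arguments. Unset Strict Implicit. Unset Printing Implicit Defensive.
Import Order.TTheory GRing.Theory Num.Theory.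
Local Open Scope ring_scope.

Lemma pairingD n (p u v : 'rV[int]_n) : pairing p (u + v) = pairing p u + pairing p v.
Proof. by rewrite /pairing -big_split; apply: eq_bigr => i _; rewrite mxE mulrDr. Qed.

Lemma pairing0 n (p : 'rV[int]_n) : pairing p 0 = 0.
Proof. by rewrite /pairing big1 // => i _; rewrite mxE mulr0. Qed.

Lemma pairingN n (p u : 'rV[int]_n) : pairing p (- u) = - pairing p u.
Proof. by rewrite /pairing -sumrN; apply: eq_bigr => i _; rewrite mxE mulrN. Qed.

Lemma pairingMn n (p u : 'rV[int]_n) c : pairing p (u *+ c) = pairing p u *+ c.
Proof. by elim: c => [|c IH]; rewrite ?mulr0n ?pairing0 // !mulrS pairingD IH. Qed.

Lemma pairingMz n (p u : 'rV[int]_n) (z : int) : pairing p (u *~ z) = pairing p u * z.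
Proof.
case: z => c; first by rewrite pairingMn -mulr_natr natz.
by rewrite NegzE mulrNz pairingN pairingMn mulrN -mulr_natr natz.
Qed.

Lemma pairing_sum n (p : 'rV[int]_n) I (r : seq I) (Q : pred I) (f : I -> 'rV[int]_n) :
  pairing p (\sum_(i <- r | Q i) f i) = \sum_(i <- r | Q i) pairing p (f i).
Proof. exact: (big_morph _ (pairingD p) (pairing0 p)). Qed.

Definition offs n k (e : 'I_k -> 'rV[int]_n) (c : 'I_k -> nat) :=
  \sum_(r < k) e r *~ (c r)%:Z.

Lemma pair_offs n k (p : 'rV[int]_n) (e : 'I_k -> 'rV[int]_n) c :
  pairing p (offs e c) = \sum_(r < k) (c r)%:Z * pairing p (e r).
Proof. by rewrite /offs pairing_sum; apply: eq_bigr => r _; rewrite pairingMz mulrC. Qed.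


Definition goodfam n m k (P : 'I_m -> 'rV[int]_n) (t : 'I_k -> 'I_m) (e : 'I_k -> 'rV[int]_n) :=
  (forall r, demazure_root P (t r) (e r)) /\
  (forall r s, pairing (P (t s)) (e r) = - (r == s)%:R).

Definition av n m k (P : 'I_m -> 'rV[int]_n) (t : 'I_k -> 'I_m) (u : 'rV[int]_n) (r : 'I_k) :=
  `|pairing (P (t r)) u|%N.

Lemma av_int n m k (P : 'I_m -> 'rV[int]_n) t u (r : 'I_k) :
  inS P u -> (av P t u r)%:Z = pairing (P (t r)) u.
Proof. by move=> hu; rewrite /av gez0_abs. Qed.

Lemma pair_offs_t n m k (P : 'I_m -> 'rV[int]_n) t (e : 'I_k -> 'rV[int]_n) :
  goodfam P t e -> forall s c, pairing (P (t s)) (offs e c) = - (c s)%:Z.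
Proof.
move=> [_ hc] s c; rewrite pair_offs (bigD1 s) //= hc eqxx big1 ?addr0 ?mulrN1 //.
by move=> r /negbTE hr; rewrite hc hr oppr0 mulr0.
Qed.

Lemma pair_e_nonneg n m k (P : 'I_m -> 'rV[int]_n) t (e : 'I_k -> 'rV[int]_n) j :
  goodfam P t e -> (forall s, j != t s) -> forall r, 0 <= pairing (P j) (e r).
Proof. by move=> [hd _] hj r; case: (hd r) => _; apply. Qed.

Lemma pair_offs_ge n m k (P : 'I_m -> 'rV[int]_n) t (e : 'I_k -> 'rV[int]_n) j :
  goodfam P t e -> (forall s, j != t s) -> forall c r,
  (c r)%:Z * pairing (P j) (e r) <= pairing (P j) (offs e c).
Proof.
move=> hg hj c r; rewrite pair_offs (bigD1 r) //= lerDl sumr_ge0 // => s _.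
by rewrite mulr_ge0 // (pair_e_nonneg hg hj).
Qed.

Lemma pair_offs_ge0 n m k (P : 'I_m -> 'rV[int]_n) t (e : 'I_k -> 'rV[int]_n) j :
  goodfam P t e -> (forall s, j != t s) -> forall c, 0 <= pairing (P j) (offs e c).
Proof.
move=> hg hj c; rewrite pair_offs sumr_ge0 // => s _.
by rewrite mulr_ge0 // (pair_e_nonneg hg hj).
Qed.

Lemma inS_offs n m k (P : 'I_m -> 'rV[int]_n) t (e : 'I_k -> 'rV[int]_n) u c :
  goodfam P t e -> inS P u -> (forall r, (c r <= av P t u r)%N) -> inS P (u + offs e c).
Proof.
move=> hg hu hc j; rewrite pairingD.
case: (pickP (fun s => t s == j)) => [s /eqP <- | hn].
  rewrite (pair_offs_t hg) -(@av_int _ _ _ P t u s hu) subr_ge0 lez_nat; exact: hc.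
rewrite addr_ge0 // (pair_offs_ge0 hg) // => s; rewrite eq_sym; apply/negbT; exact: hn.
Qed.

Lemma in_perpP n m (P : 'I_m -> 'rV[int]_n) (F : {set 'I_m}) u :
  reflect (forall j, j \in F -> pairing (P j) u = 0) (in_perp P F u).
Proof.
apply: (iffP forall_inP) => h j hj; first exact/eqP/h.
exact/eqP/h.
Qed.


Definition summand (K : fieldType) n k (e1 e2 : 'I_k -> 'rV[int]_n) (x y : 'rV[int]_n -> K)
  (u : 'rV[int]_n) (a : 'I_k -> nat) (i : {dffun forall r : 'I_k, 'I_(a r).+1}) : K :=
  (\prod_(r < k) ('C(a r, i r))%:R) * x (u + offs e2 (fun r => i r)) *
    y (u + offs e1 (fun r => (a r - i r)%N)).

Lemma rm_mulE (K : fieldType) n m k (P : 'I_m -> 'rV[int]_n) t (e1 e2 : 'I_k -> 'rV[int]_n)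
  (x y : 'rV[int]_n -> K) u :
  rm_mul P t e1 e2 x y u =
  \sum_(i : {dffun forall r : 'I_k, 'I_(av P t u r).+1}) summand e1 e2 x y u i.
Proof. by []. Qed.

Lemma offs0 n k (e : 'I_k -> 'rV[int]_n) : offs e (fun _ => 0%N) = 0.
Proof. by rewrite /offs big1 // => r _; rewrite mulr0z. Qed.

Lemma offs_eq n k (e : 'I_k -> 'rV[int]_n) c c' : c =1 c' -> offs e c = offs e c'.
Proof. by move=> h; apply: eq_bigr => r _; rewrite h. Qed.

Lemma offs1 n k (e : 'I_k -> 'rV[int]_n) r0 : offs e (fun r => nat_of_bool (r == r0)) = e r0.
Proof.
rewrite /offs (bigD1 r0) //= eqxx big1 ?addr0 // => r /negbTE ->; by rewrite mulr0z.
Qed.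

Lemma sum_single (K : fieldType) n k (e1 e2 : 'I_k -> 'rV[int]_n) (x y : 'rV[int]_n -> K) u
  (a : 'I_k -> nat) (c : 'I_k -> nat) :
  (forall r, (c r <= a r)%N) ->
  (forall i : {dffun forall r : 'I_k, 'I_(a r).+1},
      (exists r, (i r : nat) != c r) -> summand e1 e2 x y u i = 0) ->
  \sum_(i : {dffun forall r : 'I_k, 'I_(a r).+1}) summand e1 e2 x y u i =
  (\prod_(r < k) ('C(a r, c r))%:R) * x (u + offs e2 c) * y (u + offs e1 (fun r => (a r - c r)%N)).
Proof.
move=> hc hz.
pose i0 : {dffun forall r : 'I_k, 'I_(a r).+1} := finfun (fun r => inord (c r)).
have hi0 : forall r, (i0 r : nat) = c r.
  by move=> r; rewrite /i0 ffunE inordK // ltnS.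
rewrite (bigD1 i0) //= big1 ?addr0.
  rewrite /summand; congr (_ * _ * _).
  - by apply: eq_bigr => r _; rewrite hi0.
  - by rewrite (offs_eq _ hi0).
  - by congr (y (_ + _)); apply: offs_eq => r /=; rewrite hi0.
move=> i hi; apply: hz; apply/existsP; move: hi; apply: contraR.
rewrite negb_exists => /forallP h; apply/eqP/ffunP => r.
by apply/val_inj; rewrite /= hi0; move: (h r); rewrite negbK => /eqP.
Qed.

Lemma sum_zero_a (K : fieldType) n k (e1 e2 : 'I_k -> 'rV[int]_n) (x y : 'rV[int]_n -> K) u
  (a : 'I_k -> nat) :
  (forall r, a r = 0%N) -> \sum_(i : {dffun forall r : 'I_k, 'I_(a r).+1}) summand e1 e2 x y u i = x u * y u.
Proof.
move=> ha; rewrite (sum_single (c := fun _ => 0%N)) //.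
  rewrite big1 ?mul1r; last by move=> r _; rewrite bin0.
  rewrite offs0 (offs_eq _ (c' := fun _ => 0%N)) ?offs0 ?addr0 //.
  by move=> r; rewrite ha.
move=> i [r]; case: (i r) => v hv /=; move: hv; rewrite ha ltnS leqn0 => /eqP ->.
by rewrite eqxx.
Qed.

Lemma sum_two (K : fieldType) n k (e1 e2 : 'I_k -> 'rV[int]_n) (x y : 'rV[int]_n -> K) u
  (a : 'I_k -> nat) (r0 : 'I_k) :
  (forall r, a r = nat_of_bool (r == r0)) ->
  \sum_(i : {dffun forall r : 'I_k, 'I_(a r).+1}) summand e1 e2 x y u i =
  x u * y (u + e1 r0) + x (u + e2 r0) * y u.
Proof.
move=> ha.
pose i0 : {dffun forall r : 'I_k, 'I_(a r).+1} := finfun (fun r => ord0).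
pose i1 : {dffun forall r : 'I_k, 'I_(a r).+1} :=
  finfun (fun r => if r == r0 then inord 1 else ord0).
have hi0 : forall r, (i0 r : nat) = 0%N by move=> r; rewrite /i0 ffunE.
have hi1 : forall r, (i1 r : nat) = nat_of_bool (r == r0).
  move=> r; rewrite /i1 ffunE; case: eqP => [->|] //=.
  by rewrite inordK // ha eqxx.
have h10 : i1 != i0.
  by apply/eqP => e; have := hi1 r0; rewrite e hi0 eqxx.
rewrite (bigD1 i0) // (bigD1 i1) ?h10 //= big1 ?addr0; last first.
  move=> i /andP [hn0 hn1]; exfalso.
  have hr : forall r, r != r0 -> (i r : nat) = 0%N.
    move=> r hr; apply/eqP; rewrite -leqn0 -ltnS.
    by apply: leq_trans (ltn_ord _) _; rewrite ha (negbTE hr).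
  have h2 : ((i r0 : nat) < 2)%N by apply: leq_trans (ltn_ord _) _; rewrite ha eqxx.
  case: (leqP (i r0 : nat) 0) => h0.
  - move/eqP: hn0; apply; apply/ffunP => r; apply/val_inj => /=.
    rewrite hi0; case: (eqVneq r r0) => [-> | /hr //]; by apply/eqP; rewrite -leqn0.
  - move/eqP: hn1; apply; apply/ffunP => r; apply/val_inj => /=.
    rewrite hi1; case: (eqVneq r r0) => [-> | /hr //].
    by apply/eqP; rewrite eqn_leq h0 -ltnS h2.
rewrite /summand; congr (_ + _).
- rewrite big1 ?mul1r; last by move=> r _; rewrite hi0 bin0.
  rewrite (offs_eq _ hi0) offs0 addr0; congr (_ * y (_ + _)).
  by rewrite -(offs1 e1 r0); apply: offs_eq => r; rewrite hi0 subn0 ha.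
- rewrite big1 ?mul1r; last first.
    by move=> r _; rewrite hi1 ha; case: (r == r0); rewrite /= ?bin1 ?bin0.
  rewrite (offs_eq _ hi1) offs1 (offs_eq _ (c' := fun _ => 0%N)) ?offs0 ?addr0 //.
  by move=> r; rewrite hi1 ha subnn.
Qed.


Lemma orbit_zero (K : fieldType) n m (P : 'I_m -> 'rV[int]_n) (F : {set 'I_m})
  (x : 'rV[int]_n -> K) v j :
  in_orbitO P F x -> inS P v -> j \in F -> pairing (P j) v != 0 -> x v = 0.
Proof.
move=> [_ hx] hv hj hne; apply/eqP; apply: contraNT hne => /(hx _ hv) /in_perpP h.
by rewrite h.
Qed.

Lemma orbit_nz (K : fieldType) n m (P : 'I_m -> 'rV[int]_n) (F : {set 'I_m})
  (x : 'rV[int]_n -> K) v :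
  in_orbitO P F x -> inS P v -> in_perp P F v -> x v != 0.
Proof. by move=> [_ hx] hv hp; apply/(hx _ hv). Qed.

Lemma not_perp_witness n m k (P : 'I_m -> 'rV[int]_n) t (F : {set 'I_m}) (e : 'I_k -> 'rV[int]_n) s :
  goodfam P t e -> ~~ in_perp P F (e s) -> t s \notin F ->
  exists j, [/\ j \in F, (forall s', j != t s') & 0 < pairing (P j) (e s)].
Proof.
move=> hg /forall_inPn [j hj hne] hts.
have hji : forall s', j != t s'.
  move=> s'; apply/eqP => ej; move: hne; rewrite ej hg.2.
  case: (eqVneq s s') => [es | ] //=; first by move: hts; rewrite es -ej hj.
exists j; split => //; rewrite lt_def hne (pair_e_nonneg hg hji) //.
Qed.

Lemma term_zero (K : fieldType) n m k (P : 'I_m -> 'rV[int]_n) t (F : {set 'I_m})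
  (e : 'I_k -> 'rV[int]_n) (x : 'rV[int]_n -> K) u c s :
  goodfam P t e -> in_orbitO P F x -> inS P u -> (forall r, (c r <= av P t u r)%N) ->
  (0 < c s)%N -> ~~ in_perp P F (e s) -> t s \notin F -> x (u + offs e c) = 0.
Proof.
move=> hg hx hu hc hcs hne hts.
have [j [hj hji hpos]] := not_perp_witness hg hne hts.
apply: (orbit_zero hx (inS_offs hg hu hc) hj).
rewrite pairingD gt_eqF // ltr_wpDl // ?hu //.
apply: lt_le_trans (pair_offs_ge hg hji c s).
by rewrite mulr_gt0 // ltz_nat.
Qed.

Lemma vanish (K : fieldType) n m k (P : 'I_m -> 'rV[int]_n) t (F : {set 'I_m})
  (e1 e2 : 'I_k -> 'rV[int]_n) (x y : 'rV[int]_n -> K) u :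
  goodfam P t e1 -> goodfam P t e2 -> in_orbitO P F x -> in_orbitO P F y ->
  inS P u -> ~~ in_perp P F u -> rm_mul P t e1 e2 x y u = 0.
Proof.
move=> hg1 hg2 hx hy hu /forall_inPn [j hj hne].
have hpos : 0 < pairing (P j) u by rewrite lt_def hne hu.
rewrite rm_mulE big1 // => i _; rewrite /summand.
have hi : forall r, ((i r : nat) <= av P t u r)%N by move=> r; rewrite -ltnS.
have hi' : forall r, ((av P t u r - i r)%N <= av P t u r)%N by move=> r; apply: leq_subr.
have hv1 := inS_offs hg2 hu hi.
have hv2 := inS_offs hg1 hu hi'.
case: (pickP (fun s => t s == j)) => [s /eqP ejs | hn].
  have hav : (0 < av P t u s)%N by rewrite -ltz_nat (@av_int _ _ _ P t u s hu) ejs.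
  case: (ltnP (i s) (av P t u s)) => his.
    rewrite (orbit_zero hx hv1 hj) ?mulr0 ?mul0r //.
    rewrite -ejs pairingD (pair_offs_t hg2) -(@av_int _ _ _ P t u s hu).
    by rewrite subr_eq0 eqz_nat neq_ltn his orbT.
  rewrite (orbit_zero hy hv2 hj) ?mulr0 ?mul0r //.
  rewrite -ejs pairingD (pair_offs_t hg1) -(@av_int _ _ _ P t u s hu) /=.
  have -> : (av P t u s - i s = 0)%N by apply/eqP; rewrite subn_eq0.
  by rewrite subr0 eqz_nat -lt0n.
have hji : forall s, j != t s by move=> s; rewrite eq_sym; apply/negbT; exact: hn.
rewrite (orbit_zero hx hv1 hj) ?mulr0 ?mul0r //.
by rewrite pairingD gt_eqF // ltr_wpDr // (pair_offs_ge0 hg2 hji).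
Qed.


Lemma av0_of_perp n m k (P : 'I_m -> 'rV[int]_n) t (F : {set 'I_m}) u (r : 'I_k) :
  in_perp P F u -> t r \in F -> av P t u r = 0%N.
Proof. by move=> /in_perpP h hr; rewrite /av h. Qed.

Definition cstar n m k (P : 'I_m -> 'rV[int]_n) t (F : {set 'I_m}) (e2 : 'I_k -> 'rV[int]_n) u r :=
  if in_perp P F (e2 r) then av P t u r else 0%N.

Lemma c3_eval (K : fieldType) n m k (P : 'I_m -> 'rV[int]_n) t (F : {set 'I_m})
  (e1 e2 : 'I_k -> 'rV[int]_n) (x : 'rV[int]_n -> K) u :
  goodfam P t e1 -> goodfam P t e2 ->
  (forall r, t r \notin F -> (in_perp P F (e1 r) (+) in_perp P F (e2 r))) ->
  in_orbitO P F x -> inS P u -> in_perp P F u ->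
  rm_mul P t e1 e2 x x u =
  x (u + offs e2 (cstar P t F e2 u)) *
  x (u + offs e1 (fun r => (av P t u r - cstar P t F e2 u r)%N)).
Proof.
move=> hg1 hg2 hC hx hu hpu.
have hc : forall r, (cstar P t F e2 u r <= av P t u r)%N.
  by move=> r; rewrite /cstar; case: ifP.
rewrite rm_mulE (sum_single hc).
  rewrite big1 ?mul1r // => r _; rewrite /cstar; case: ifP => _.
    by rewrite binn. by rewrite bin0.
move=> i [r hr]; rewrite /summand.
have hi : forall r, ((i r : nat) <= av P t u r)%N by move=> r'; rewrite -ltnS.
have hi' : forall r, ((av P t u r - i r)%N <= av P t u r)%N by move=> r'; apply: leq_subr.
have htr : t r \notin F.
  apply/negP => htr.
  have hv0 : (i r : nat) = 0%N.
    by apply/eqP; rewrite -leqn0; apply: leq_trans (hi r) _; rewrite (av0_of_perp hpu htr).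
  move: hr; rewrite /cstar hv0; case: ifP => // _.
  by rewrite (av0_of_perp hpu htr).
move: (hC r htr) hr; rewrite /cstar; case: ifP => h2 /=.
  rewrite addbT => h1 hne.
  rewrite (term_zero (s := r) hg1 hx hu hi') ?mulr0 //.
  by rewrite subn_gt0 ltn_neqAle hne hi.
rewrite addbF => h1 hne.
rewrite (term_zero (s := r) hg2 hx hu hi) ?h2 ?mulr0 ?mul0r //.
by rewrite lt0n.
Qed.

Lemma perpU n m k (P : 'I_m -> 'rV[int]_n) (t : 'I_k -> 'I_m) (F : {set 'I_m}) u :
  in_perp P (F :|: [set t r | r : 'I_k]) u ->
  in_perp P F u /\ forall r, pairing (P (t r)) u = 0.
Proof.
move=> /in_perpP h; split.
  by apply/in_perpP => j hj; apply: h; rewrite in_setU hj.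
by move=> r; apply: h; rewrite in_setU; apply/orP; right; apply/imsetP; exists r.
Qed.

Lemma c3_main (K : fieldType) n m k (P : 'I_m -> 'rV[int]_n) t (F : {set 'I_m})
  (e1 e2 : 'I_k -> 'rV[int]_n) (x : 'rV[int]_n -> K) :
  goodfam P t e1 -> goodfam P t e2 ->
  (forall r, t r \notin F -> (in_perp P F (e1 r) (+) in_perp P F (e2 r))) ->
  in_orbitO P F x ->
  (rm_idempotent P t e1 e2 x <->
   forall u, inS P u -> in_perp P (F :|: [set t r | r : 'I_k]) u -> x u = 1).
Proof.
move=> hg1 hg2 hC hx; split.
  move=> hid u hu hp; have [hpF hpt] := perpU hp.
  have := hid u hu; rewrite rm_mulE sum_zero_a; last by move=> r; rewrite /av hpt.
  move=> e; apply: (mulfI (orbit_nz hx hu hpF)); by rewrite mulr1.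
move=> h1 u hu; case hp: (in_perp P F u); last first.
  rewrite (vanish hg1 hg2 hx hx hu) ?hp //.
  by symmetry; apply/eqP; apply: contraFT hp => /(hx.2 u hu).
rewrite (c3_eval hg1 hg2 hC hx hu hp).
set c := cstar P t F e2 u.
have hc : forall r, (c r <= av P t u r)%N by move=> r; rewrite /c /cstar; case: ifP.
have hc' : forall r, ((av P t u r - c r)%N <= av P t u r)%N by move=> r; apply: leq_subr.
have hv1 := inS_offs hg2 hu hc.
have hv2 := inS_offs hg1 hu hc'.
pose u0 := u + offs e2 c + offs e1 (fun r => (av P t u r - c r)%N).
have ht0 : forall s, pairing (P (t s)) u0 = 0.
  move=> s; rewrite /u0 !pairingD (pair_offs_t hg1) (pair_offs_t hg2).
  rewrite -(@av_int _ _ _ P t u s hu) subzn ?hc //.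
  by rewrite subrr.
have hu0S : inS P u0.
  move=> j; case: (pickP (fun s => t s == j)) => [s /eqP <- | hn].
    by rewrite ht0.
  have hji : forall s, j != t s by move=> s; rewrite eq_sym; apply/negbT; exact: hn.
  rewrite /u0 !pairingD !addr_ge0 ?hu //; by apply: (pair_offs_ge0 _ hji).
have hu0P : in_perp P (F :|: [set t r | r : 'I_k]) u0.
  apply/in_perpP => j; rewrite in_setU => /orP [hjF | /imsetP [s _ ->]]; last exact: ht0.
  have /in_perpP hpj := hp.
  rewrite /u0 !pairingD (hpj j hjF) add0r !pair_offs.
  rewrite !big1 ?addr0 // => s _; rewrite /c /cstar.
    case: ifP => h2; first by rewrite subnn mul0r.
    rewrite subn0; case htF: (t s \in F).
      by rewrite (av0_of_perp hp htF) mul0r.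
    move: (hC s (negbT htF)); rewrite h2 addbF => h1'.
    by move/in_perpP: h1' => ->; rewrite ?mulr0.
  case: ifP => h; last by rewrite mul0r.
  by move/in_perpP: h => ->; rewrite ?mulr0.
have hsum : (u + offs e2 c) + (u + offs e1 (fun r => (av P t u r - c r)%N)) = u0 + u.
  by rewrite /u0 addrA (addrAC _ (offs e1 _) u).
rewrite -(hx.1.2 _ _ hv1 hv2) hsum (hx.1.2 _ _ hu0S hu) (h1 _ hu0S hu0P) mul1r.
by [].
Qed.


Lemma idem_one (K : fieldType) n m k (P : 'I_m -> 'rV[int]_n) t (F : {set 'I_m})
  (e1 e2 : 'I_k -> 'rV[int]_n) (x : 'rV[int]_n -> K) v :
  in_orbitO P F x -> rm_idempotent P t e1 e2 x -> inS P v -> in_perp P F v ->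
  (forall s, pairing (P (t s)) v = 0) -> x v = 1.
Proof.
move=> hx hid hv hpF hpt.
have := hid v hv; rewrite rm_mulE sum_zero_a; last by move=> r; rewrite /av hpt.
move=> e; apply: (mulfI (orbit_nz hx hv hpF)); by rewrite mulr1.
Qed.

Definition fsel n m k (P : 'I_m -> 'rV[int]_n) (F : {set 'I_m}) (e1 e2 : 'I_k -> 'rV[int]_n) s :=
  if in_perp P F (e1 s) then e1 s else e2 s.

Lemma goodfam_fsel n m k (P : 'I_m -> 'rV[int]_n) t (F : {set 'I_m}) (e1 e2 : 'I_k -> 'rV[int]_n) :
  goodfam P t e1 -> goodfam P t e2 -> goodfam P t (fsel P F e1 e2).
Proof.
move=> [hd1 hc1] [hd2 hc2]; split => [r | r s]; rewrite /fsel; case: ifP => _ //.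
Qed.

Lemma c2_main (K : fieldType) n m k (P : 'I_m -> 'rV[int]_n) t (F : {set 'I_m})
  (e1 e2 : 'I_k -> 'rV[int]_n) (x : 'rV[int]_n -> K) r :
  goodfam P t e1 -> goodfam P t e2 -> is_face P F ->
  in_orbitO P F x -> rm_idempotent P t e1 e2 x ->
  t r \notin F ->
  ((~~ in_perp P F (e1 r) /\ ~~ in_perp P F (e2 r)) \/
       (in_perp P F (e1 r) /\ in_perp P F (e2 r))) -> False.
Proof.
move=> hg1 hg2 [w [hwS hwF]] hx hid htr hcase.
have hwP : in_perp P F w by apply/in_perpP => j /hwF.
have hwpos : forall s, t s \notin F -> (0 < av P t w s)%N.
  move=> s hs; rewrite /av absz_gt0; apply/eqP => /hwF h; by rewrite h in hs.
case: (boolP [exists s, [&& t s \notin F, ~~ in_perp P F (e1 s) & ~~ in_perp P F (e2 s)]]).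
  move=> /existsP [s /and3P [hs h1 h2]].
  have : rm_mul P t e1 e2 x x w = 0.
    rewrite rm_mulE big1 // => i _; rewrite /summand.
    have hi : forall r, ((i r : nat) <= av P t w r)%N by move=> r'; rewrite -ltnS.
    have hi' : forall r, ((av P t w r - i r)%N <= av P t w r)%N by move=> r'; apply: leq_subr.
    case: (posnP (i s)) => his.
      rewrite (term_zero (s := s) hg1 hx hwS hi') ?mulr0 //.
      by rewrite his subn0 hwpos.
    by rewrite (term_zero (s := s) hg2 hx hwS hi) ?mulr0 ?mul0r.
  rewrite (hid w hwS) => /eqP; apply/negP; exact: orbit_nz hx hwS hwP.
rewrite negb_exists => /forallP hnone.
have hsel : forall s, t s \notin F -> in_perp P F (e1 s) || in_perp P F (e2 s).
  move=> s hs; move: (hnone s); rewrite hs /= negb_and !negbK.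
  by case/orP => ->; rewrite ?orbT.
have [he1r he2r] : in_perp P F (e1 r) /\ in_perp P F (e2 r).
  case: hcase => // [[h1 h2]]; move: (hsel r htr); by rewrite (negbTE h1) (negbTE h2).
pose f := fsel P F e1 e2.
have hgf : goodfam P t f := @goodfam_fsel _ _ _ P t F e1 e2 hg1 hg2.
pose c s := if s == r then (av P t w r).-1 else av P t w s.
have hc : forall s, (c s <= av P t w s)%N.
  by move=> s; rewrite /c; case: eqP => [-> |] //; apply: leq_pred.
pose u := w + offs f c.
have huS : inS P u := inS_offs hgf hwS hc.
have hut : forall s, pairing (P (t s)) u = (s == r)%:R.
  move=> s; rewrite /u pairingD (pair_offs_t hgf) -(@av_int _ _ _ P t w s hwS) /c.
  case: eqP => [-> | _]; last by rewrite subrr.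
  have hp := hwpos r htr.
  by rewrite -(prednK hp) /= -addn1 PoszD addrAC subrr add0r.
have huP : in_perp P F u.
  apply/in_perpP => j hj; rewrite /u pairingD ((elimT (in_perpP _ _ _)) hwP j hj) add0r.
  rewrite pair_offs big1 // => s _.
  case: (posnP (c s)) => [-> | hcs]; first by rewrite mul0r.
  suff : in_perp P F (f s) by move/in_perpP => ->; rewrite ?mulr0.
  rewrite /f /fsel; case: ifP => // h1.
  have hs : t s \notin F.
    apply/negP => hs; move: (hc s); rewrite (av0_of_perp hwP hs) leqn0.
    by move/eqP => h; rewrite h in hcs.
  by move: (hsel s hs); rewrite h1.
have hstep : forall e, goodfam P t e -> in_perp P F (e r) -> x (u + e r) = 1.
  move=> e hge her.
  have ht0 : forall s, pairing (P (t s)) (u + e r) = 0.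
    by move=> s; rewrite pairingD hut hge.2 eq_sym subrr.
  apply: (idem_one hx hid) => //.
    move=> j; case: (pickP (fun s => t s == j)) => [s /eqP <- | hn].
      by rewrite ht0.
    have hji : forall s, j != t s by move=> s; rewrite eq_sym; apply/negbT; exact: hn.
    by rewrite pairingD addr_ge0 ?huS // (pair_e_nonneg hge hji).
  apply/in_perpP => j hj; rewrite pairingD.
  have /in_perpP hu' := huP; have /in_perpP he' := her.
  by rewrite (hu' j hj) (he' j hj) addr0.
have hx1 := hstep _ hg1 he1r.
have hx2 := hstep _ hg2 he2r.
have := hid u huS; rewrite rm_mulE (@sum_two _ _ _ e1 e2 x x u (av P t u) r); last first.
  by move=> s; apply/eqP; rewrite -eqz_nat /av gez0_abs ?hut ?huS //; case: (s == r).
rewrite hx1 hx2 mulr1 mul1r => /eqP; rewrite -subr_eq0 addrK => /eqP hx0.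
by move: (orbit_nz hx huS huP); rewrite hx0 eqxx.
Qed.


Lemma in_perpD n m (P : 'I_m -> 'rV[int]_n) (F : {set 'I_m}) u v :
  inS P u -> inS P v -> in_perp P F (u + v) = in_perp P F u && in_perp P F v.
Proof.
move=> hu hv; apply/in_perpP/andP => [h | [/in_perpP h1 /in_perpP h2]].
  split; apply/in_perpP => j hj; have := h j hj; rewrite pairingD => /eqP;
  by rewrite paddr_eq0 ?hu ?hv // => /andP [/eqP ? /eqP ?].
by move=> j hj; rewrite pairingD h1 ?h2 ?addr0.
Qed.

Lemma x_face_orbit (K : fieldType) n m (P : 'I_m -> 'rV[int]_n) (F : {set 'I_m}) :
  in_orbitO P F (x_face K P F).
Proof.
split; first split.
- rewrite /x_face; have -> // : in_perp P F 0.
  by apply/in_perpP => j _; rewrite pairing0.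
- move=> u v hu hv; rewrite /x_face (in_perpD _ hu hv).
  by case: (in_perp P F u); case: (in_perp P F v); rewrite ?mulr1 ?mulr0 ?mul0r.
- move=> u _; rewrite /x_face; case: ifP => _; by rewrite ?oner_eq0 ?eqxx.
Qed.

Theorem mainTheorem6
  (K : closedFieldType) (hK : [pchar K] =i pred0)
  (n m k : nat) (P : 'I_m -> 'rV[int]_n)
  (hP : ray_generators P) (hsc : strongly_convex P)
  (t : 'I_k -> 'I_m) (htau : regular_face P t)
  (e1 e2 : 'I_k -> 'rV[int]_n) (he : compatible P t e1 e2)
  (F : {set 'I_m}) (hF : is_face P F) :
  (* (1) tau subset gamma  ==>  E_gamma = {x_gamma} *)
  ((forall r, t r \in F) ->
     in_orbitO P F (x_face K P F) /\ rm_idempotent P t e1 e2 (x_face K P F) /\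
     forall x : 'rV[int]_n -> K, in_orbitO P F x -> rm_idempotent P t e1 e2 x ->
       eq_pt P x (x_face K P F)) /\
  (* (2) ==> E_gamma empty *)
  ((exists r, t r \notin F /\
      ((~~ in_perp P F (e1 r) /\ ~~ in_perp P F (e2 r)) \/
       (in_perp P F (e1 r) /\ in_perp P F (e2 r)))) ->
     forall x : 'rV[int]_n -> K, in_orbitO P F x -> ~ rm_idempotent P t e1 e2 x) /\
  (* (3) ==> E_gamma = {x in O_gamma | chi^u(x) = 1 on cone(tau,gamma)^perp cap S} *)
  ((forall r, t r \notin F -> (in_perp P F (e1 r) (+) in_perp P F (e2 r))) ->
     forall x : 'rV[int]_n -> K, in_orbitO P F x ->
       (rm_idempotent P t e1 e2 x <->
        forall u, inS P u -> in_perp P (F :|: [set t r | r : 'I_k]) u -> x u = 1)).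
Proof.
case: he => hd hc.
have hg1 : goodfam P t e1 by split => [r | r s]; [exact: (hd r).1 | exact: (hc r s).1].
have hg2 : goodfam P t e2 by split => [r | r s]; [exact: (hd r).2 | exact: (hc r s).2].
split; [|split].
- move=> htF.
  have hC : forall r, t r \notin F -> (in_perp P F (e1 r) (+) in_perp P F (e2 r)).
    by move=> r; rewrite htF.
  have hxo := x_face_orbit K P F.
  split => //; split.
    apply/(c3_main hg1 hg2 hC hxo) => u hu /perpU [hp _].
    by rewrite /x_face hp.
  move=> x hx hid u hu; rewrite /x_face; case: ifP => hp; last first.
    by apply/eqP; apply: contraFT hp => /(hx.2 u hu).
  apply: ((c3_main hg1 hg2 hC hx).1 hid u hu).
  apply/in_perpP => j; rewrite in_setU => /orP [hj | /imsetP [s _ ->]].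
    by move/in_perpP: hp; apply.
  by move/in_perpP: hp; apply.
- move=> [r [htr hcase]] x hx hid.
  exact: (c2_main hg1 hg2 hF hx hid htr hcase).
- move=> hC x hx; exact: c3_main hg1 hg2 hC hx.
Qed.
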